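(* Let $\alpha,\beta,\gamma,x$ be real numbers, $\lambda$ a nonnegative integer and $n$ a nonnegative integer. Then $$xA_{n}^{\lambda+1,x}(\alpha,\beta,\gamma+\beta)=(x+1)A_{n}^{\lambda+1,x}(\alpha,\beta,\gamma)-A_{n}^{\lambda,x}(\alpha,\beta,\gamma)$$ and $$A_{n+1}^{\lambda,x}(\alpha,\beta,\gamma-\alpha)-(x+1)\lambda\beta\, A_{n}^{\lambda+1,x}(\alpha,\beta,\gamma)=(\gamma-\alpha-\lambda\beta)A_{n}^{\lambda,x}(\alpha,\beta,\gamma).$$
   Context: For a number $t$ and $\alpha$, the generalised factorial is $(t|\alpha)_n=\prod_{j=0}^{n-1}(t-j\alpha)$ for $n\ge 1$ and $(t|\alpha)_0=1$. For parameters $\alpha,\beta,\gamma$, the generalised Stirling numbers $S(n,k,\alpha,\beta,\gamma)$ ($0\le k\le n$) are defined by the polynomial identity $(t|\alpha)_n=\sum_{k=0}^{n}S(n,k,\alpha,\beta,\gamma)\,(t-\gamma|\beta)_k$ in the variable $t$. For a nonnegative integer $\lambda$ put $\binom{k+\lambda-1}{k}=\lambda(\lambda+1)\cdots(\lambda+k-1)/k!$ (equal to $1$ for $k=0$). Define $$A^{\lambda,x}_n(\alpha,\beta,\gamma)=\sum_{k=0}^{n}\binom{k+\lambda-1}{k}(-1)^{n+k}\beta^k k!\,S(n,k,\alpha,-\beta,-\gamma)\,x^k .$$ (For $\alpha\neq0$ these have exponential generating function $\sum_n A^{\lambda,x}_n(\alpha,\beta,\gamma)t^n/n!=(1-\alpha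 t)^{-\gamma/\alpha}\big(1-x[(1-\alpha t)^{-\beta/\alpha}-1]\big)^{-\lambda}$.) *)

(* Defs.v *)
From HB Require Import structures.
From mathcomp Require Import all_boot all_order all_algebra.
From mathcomp Require Import reals.
From Stdlib Require Import ClassicalEpsilon.
Set Implicit Arguments. Unset Strict Implicit. Unset Printing Implicit Defensive.
Import Order.TTheory GRing.Theory Num.Theory.
Local Open Scope ring_scope.

(* (t - c | a)_n as a polynomial in t : prod_{j<n} (t - c - j a). *)
Definition gfact_poly (R : realType) (c a : R) (n : nat) : {poly R} :=
  \prod_(j < n) ('X - (c + j%:R * a)%:P).

Definition stirling_spec (R : realType) (n : nat) (alpha beta gamma : R)
  (s : nat -> R) : Prop :=
  gfact_poly 0 alpha n = \sum_(k < n.+1) s k *: gfact_poly gamma beta k.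

(* Generalised Stirling numbers S(n,k,alpha,beta,gamma), 0 <= k <= n, defined
   as the (unique) coefficients of the expansion above. *)
Definition gstirling (R : realType) (n k : nat) (alpha beta gamma : R) : R :=
  epsilon (inhabits (fun _ : nat => (0 : R))) (stirling_spec n alpha beta gamma) k.

(* binom(k+lambda-1, k) = lambda (lambda+1) ... (lambda+k-1) / k! *)
Definition rbinom (R : realType) (lam k : nat) : R :=
  (\prod_(i < k) (lam + i)%:R) / (k`!)%:R.

Definition Apoly (R : realType) (n lam : nat) (x alpha beta gamma : R) : R :=
  \sum_(k < n.+1) rbinom R lam k * (-1) ^+ (n + k) * beta ^+ k * (k`!)%:R
     * gstirling n k alpha (- beta) (- gamma) * x ^+ k.

(* Main.v *)
Require Import Defs.
From mathcomp Require Import all_boot all_order all_algebra.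
From mathcomp Require Import reals ring.
From Stdlib Require Import ClassicalEpsilon.
Import GRing.Theory Num.Theory.
Local Open Scope ring_scope.

Section S.
Variable R : realType.
Implicit Types (c a al : R).

Notation G := (@gfact_poly R).

Lemma G_size c a k : size (G c a k) = k.+1.
Proof. by rewrite /gfact_poly size_prod_XsubC /index_enum unlock -enumT size_enum_ord. Qed.

Lemma G_monic c a k : G c a k \is monic.
Proof. exact: monic_prod_XsubC. Qed.

Lemma G_lead c a k : (G c a k)`_k = 1.
Proof. by have := G_monic c a k; rewrite monicE /lead_coef G_size => /eqP. Qed.

Lemma G_high c a k j : (k < j)%N -> (G c a k)`_j = 0.
Proof. by move=> h; apply: nth_default; rewrite G_size. Qed.

Lemma G0 c a : G c a 0 = 1.
Proof. by rewrite /gfact_poly big_ord0. Qed.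

Lemma G_succ c a k : G c a k.+1 = G c a k * ('X - (c + k%:R * a)%:P).
Proof. by rewrite /gfact_poly big_ord_recr. Qed.

Lemma G_shift c a k : G c a k.+1 = ('X - c%:P) * G (c + a) a k.
Proof.
rewrite /gfact_poly big_ord_recl /= mul0r addr0; congr (_ * _).
apply: eq_bigr => i _; congr ('X - _%:P).
rewrite /bump /= add1n -addn1 natrD; ring.
Qed.

Lemma G_comp c a al k : G c a k \Po ('X - al%:P) = G (c + al) a k.
Proof.
elim: k => [|k IH]; first by rewrite !G0 comp_polyC.
rewrite !G_succ comp_polyM IH comp_polyB comp_polyX comp_polyC; congr (_ * _).
rewrite -addrA -opprD -polyCD; congr (_ - _%:P); ring.
Qed.

Lemma G_X c a k : 'X * G c a k = G c a k.+1 + (c + k%:R * a) *: G c a k.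
Proof.
rewrite G_succ mulrBr -mul_polyC mulrC [_%:P * _]mulrC; ring.
Qed.

Lemma G_diff c a k :
  G c a k.+1 = G (c + a) a k.+1 + (k.+1%:R * a) *: G (c + a) a k.
Proof.
rewrite G_shift [G (c + a) a k.+1]G_succ -mul_polyC.
have -> : c%:P = (c + a + k%:R * a)%:P - (k.+1%:R * a)%:P.
  by rewrite -polyCB; congr _%:P; rewrite -addn1 natrD; ring.
ring.
Qed.

Lemma G_span c a N (p : {poly R}) : (size p <= N)%N ->
  exists s : nat -> R, p = \sum_(k < N) s k *: G c a k.
Proof.
elim: N p => [|N IH] p hp.
  exists (fun _ => 0); rewrite big_ord0; exact/size_poly_leq0P.
have hq : (size (p - p`_N *: G c a N)%R <= N)%N.
  apply/leq_sizeP => j hj; rewrite coefB coefZ.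
  case: (ltngtP j N) => hjN.
  - by rewrite ltnNge hj in hjN.
  - rewrite G_high // mulr0 subr0; by move/leq_sizeP: hp => hp; rewrite (hp j hjN).
  - by rewrite hjN G_lead mulr1 subrr.
have [s hs] := IH _ hq.
exists (fun k => if k == N then p`_N else s k).
rewrite big_ord_recr /= eqxx.
rewrite (eq_bigr (fun k : 'I_N => s k *: G c a k)); last first.
  by move=> i _; rewrite ltn_eqF.
by rewrite -hs subrK.
Qed.

Lemma G_indep c a N (s : nat -> R) :
  \sum_(k < N) s k *: G c a k = 0 -> forall k, (k < N)%N -> s k = 0.
Proof.
elim: N => [|N IH] H k hk; first by [].
move: H; rewrite big_ord_recr /= => H.
have hN : s N = 0.
  have := congr1 (fun p : {poly R} => p`_N) H; rewrite /= coefD coef_sum coef0 coefZ G_lead mulr1.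
  rewrite big1 ?add0r // => i _; by rewrite coefZ G_high ?mulr0.
move: H; rewrite hN scale0r addr0 => H.
case: (ltngtP k N) => hkN; first exact: IH.
- by move: hk; rewrite ltnS leqNgt hkN.
- by rewrite hkN.
Qed.

Definition shat (al a c : R) n k := if (k <= n)%N then gstirling n k al a c else 0.

Lemma gst_spec al a c n : stirling_spec n al a c (fun k => gstirling n k al a c).
Proof.
have [s hs] := @G_span c a n.+1 (G 0 al n) (eq_leq (G_size _ _ _)).
exact: (@epsilon_spec _ (inhabits (fun _ : nat => (0:R))) (stirling_spec n al a c) (ex_intro _ s hs)).
Qed.

Lemma shat_spec al a c n N : (n < N)%N ->
  G 0 al n = \sum_(k < N) shat al a c n k *: G c a k.
Proof.
move=> hN; have := gst_spec al a c n; rewrite /stirling_spec => ->.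
rewrite (@big_ord_widen _ _ _ n.+1 N (fun k => gstirling n k al a c *: G c a k)) // big_mkcond /=.
apply: eq_bigr => i _; rewrite /shat ltnS; case: ifP => //; by rewrite scale0r.
Qed.

Lemma shat_uniq al a c n N (s : nat -> R) : (n < N)%N ->
  G 0 al n = \sum_(k < N) s k *: G c a k ->
  forall k, (k < N)%N -> s k = shat al a c n k.
Proof.
move=> hN hs k hk; apply/eqP; rewrite -subr_eq0; apply/eqP.
move: k hk; apply: (@G_indep c a N (fun k => s k - shat al a c n k)).
rewrite (eq_bigr (fun k : 'I_N => s k *: G c a k - shat al a c n k *: G c a k)).
  by rewrite sumrB -hs -shat_spec // subrr.
by move=> i _; rewrite scalerBl.
Qed.

Lemma shat_out al a c n k : (n < k)%N -> shat al a c n k = 0.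
Proof. by move=> h; rewrite /shat leqNgt h. Qed.

Lemma comp_sum N (F : 'I_N -> {poly R}) q :
  (\sum_(k < N) F k) \Po q = \sum_(k < N) (F k \Po q).
Proof.
elim: N F => [|N IH] F; first by rewrite !big_ord0 comp_poly0.
by rewrite !big_ord_recr comp_polyD (IH (fun i => F (widen_ord (leqnSn N) i))).
Qed.

Lemma shat_rec1 al a c n k : (k < n.+1)%N ->
  shat al a (c + a) n k = shat al a c n k + shat al a c n k.+1 * (k.+1%:R * a).
Proof.
move=> hk; symmetry.
set s := shat al a c n.
apply: (@shat_uniq al a (c + a) n n.+1 (fun k => s k + s k.+1 * (k.+1%:R * a))) => //.
rewrite (@shat_spec al a c n n.+2) // big_ord_recl /=.
rewrite (eq_bigr (fun i : 'I_n.+1 => s i.+1 *: G (c+a) a i.+1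
     + (s i.+1 * (i.+1%:R * a)) *: G (c+a) a i)); last first.
  by move=> i _; rewrite /bump leq0n add1n G_diff scalerDr scalerA.
rewrite big_split /=.
rewrite [RHS](eq_bigr (fun i : 'I_n.+1 => s i *: G (c+a) a i + (s i.+1 * (i.+1%:R * a)) *: G (c+a) a i)); last first.
  by move=> i _; rewrite scalerDl.
rewrite [RHS]big_split /= addrA; congr (_ + _).
have E1 := @big_ord_recl _ 0 +%R n.+1 (fun k => s k *: G (c+a) a k).
have E2 := @big_ord_recr _ 0 +%R n.+1 (fun k => s k *: G (c+a) a k).
rewrite /= in E1 E2.
rewrite E2 /s shat_out // scale0r addr0 in E1.
rewrite E1 !G0; congr (_ + _); apply: eq_bigr => i _; by rewrite /bump leq0n add1n.
Qed.

Lemma shat_rec2 al a c n k : (k < n.+2)%N ->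
  shat al a (c + al) n.+1 k =
  (if k is k'.+1 then shat al a c n k' else 0) + shat al a c n k * (c + al + k%:R * a).
Proof.
move=> hk; symmetry.
set s := shat al a c n.
apply: (@shat_uniq al a (c + al) n.+1 n.+2
   (fun k => (if k is k'.+1 then s k' else 0) + s k * (c + al + k%:R * a))) => //.
have HG : G (0 + al) al n = G 0 al n \Po ('X - al%:P) by rewrite G_comp.
rewrite G_shift polyC0 subr0 HG (@shat_spec al a c n n.+1) //.
rewrite comp_sum mulr_sumr.
rewrite (eq_bigr (fun i : 'I_n.+1 => s i *: G (c+al) a i.+1
     + (s i * (c + al + i%:R * a)) *: G (c+al) a i)); last first.
  by move=> i _; rewrite comp_polyZ G_comp -scalerAr G_X scalerDr scalerA.
rewrite big_split /=.
rewrite [RHS](eq_bigr (fun i : 'I_n.+2 => (if nat_of_ord i is k'.+1 then s k' else 0) *: G (c+al) a i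
   + (s i * (c + al + i%:R * a)) *: G (c+al) a i)); last first.
  by move=> i _; rewrite scalerDl.
rewrite [RHS]big_split /=; congr (_ + _).
  rewrite [RHS]big_ord_recl /= scale0r add0r; apply: eq_bigr => i _; by rewrite /bump leq0n add1n.
by rewrite [RHS]big_ord_recr /= /s shat_out // mul0r scale0r addr0.
Qed.

Definition u (lam k : nat) : R := \prod_(i < k) (lam + i)%:R.

Lemma u0 lam : u lam 0 = 1.
Proof. by rewrite /u big_ord0. Qed.

Lemma u_recr lam k : u lam k.+1 = u lam k * (lam + k)%:R.
Proof. by rewrite /u big_ord_recr. Qed.

Lemma u_recl lam k : u lam k.+1 = lam%:R * u lam.+1 k.
Proof.
rewrite /u big_ord_recl /= addn0; congr (_ * _); apply: eq_bigr => i _.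
by rewrite /bump leq0n add1n addSnnS.
Qed.

Lemma rbinom_u lam k : rbinom R lam k * (k`!)%:R = u lam k.
Proof.
rewrite /rbinom divfK //; by rewrite pnatr_eq0 -lt0n fact_gt0.
Qed.

Lemma A_eq n lam x al be ga : Apoly n lam x al be ga =
  (-1) ^+ n * \sum_(k < n.+1) (u lam k * (- (be * x)) ^+ k * shat al (- be) (- ga) n k).
Proof.
rewrite /Apoly mulr_sumr; apply: eq_bigr => i _.
rewrite /shat -ltnS ltn_ord -rbinom_u (exprNn (be * x)) exprMn exprD; ring.
Qed.

Lemma sum_shift N (g : nat -> R) : g 0%N = 0 -> g N = 0 ->
  \sum_(k < N) g k.+1 = \sum_(k < N) g k.
Proof.
case: N => [|m] h0 hN; first by rewrite !big_ord0.
rewrite big_ord_recr /= hN addr0 big_ord_recl h0 add0r.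
by apply: eq_bigr => i _; rewrite /bump ?leq0n ?add1n.
Qed.

End S.
Arguments shat {R}.

Theorem theorem8 (R : realType) (alpha beta gamma x : R) (lam n : nat) :
  x * Apoly n lam.+1 x alpha beta (gamma + beta)
    = (x + 1) * Apoly n lam.+1 x alpha beta gamma - Apoly n lam x alpha beta gamma
  /\
  Apoly n.+1 lam x alpha beta (gamma - alpha)
    - (x + 1) * lam%:R * beta * Apoly n lam.+1 x alpha beta gamma
    = (gamma - alpha - lam%:R * beta) * Apoly n lam x alpha beta gamma.
Proof.
set s := shat alpha (- beta) (- gamma) n.
set p := - (beta * x).
split.
- rewrite !A_eq opprD.
  set g := fun k : nat => match k with 0%N => 0
     | k'.+1 => u R lam.+1 k' * p ^+ k' * (s k * (k%:R * - beta)) end.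
  have E1 : \sum_(k < n.+1) u R lam.+1 k * p ^+ k * shat alpha (- beta) (- gamma - beta) n k
     = \sum_(k < n.+1) u R lam.+1 k * p ^+ k * s k + \sum_(k < n.+1) g k.
    rewrite -(@sum_shift R n.+1 g) //; last by rewrite /g /s shat_out // mul0r mulr0.
    rewrite -big_split /=; apply: eq_bigr => i _.
    by rewrite shat_rec1 // /g /s; ring.
  have E2 : \sum_(k < n.+1) u R lam k * p ^+ k * s k
     = \sum_(k < n.+1) u R lam.+1 k * p ^+ k * s k - x * \sum_(k < n.+1) g k.
    rewrite mulr_sumr -sumrB; apply: eq_bigr => i _.
    case: (nat_of_ord i) => [|k] /=; first by rewrite !u0 mulr0 subr0.
    rewrite u_recl u_recr /p exprS -[k.+1]addn1 -[lam.+1]addn1 !natrD; ring.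
  rewrite E1 E2; ring.
- rewrite !A_eq.
  have -> : - (gamma - alpha) = - gamma + alpha by ring.
  set T := \sum_(k < n.+1) u R lam k * p ^+ k * s k.
  set T3 := \sum_(k < n.+1) u R lam.+1 k * p ^+ k * s k.
  have E : \sum_(k < n.+2) u R lam k * p ^+ k * shat alpha (- beta) (- gamma + alpha) n.+1 k
     = \sum_(k < n.+1) (u R lam k.+1 * p ^+ k.+1 * s k
                       + u R lam k * p ^+ k * (s k * (- gamma + alpha + k%:R * - beta))).
    rewrite big_split /=.
    rewrite (eq_bigr (fun k : 'I_n.+2 => u R lam k * p ^+ k * (if nat_of_ord k is k'.+1 then s k' else 0)
        + u R lam k * p ^+ k * (s k * (- gamma + alpha + k%:R * - beta)))); last first.
      by move=> i _; rewrite shat_rec2 // mulrDr.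
    rewrite big_split /=; congr (_ + _).
      rewrite big_ord_recl /= mulr0 add0r; apply: eq_bigr => i _; by rewrite /bump ?leq0n ?add1n.
    by rewrite big_ord_recr /= /s shat_out // !mul0r mulr0 addr0.
  have E' : \sum_(k < n.+1) (u R lam k.+1 * p ^+ k.+1 * s k
                       + u R lam k * p ^+ k * (s k * (- gamma + alpha + k%:R * - beta)))
     = - ((x + 1) * lam%:R * beta) * T3 - (gamma - alpha - lam%:R * beta) * T.
    rewrite /T /T3 !mulr_sumr -sumrB; apply: eq_bigr => i _.
    set U := u R lam i; set U' := u R lam.+1 i.
    have H : lam%:R * U' = U * (lam + i)%:R by rewrite -u_recl u_recr.
    rewrite u_recl -/U'.
    apply/eqP; rewrite -subr_eq0; apply/eqP.
    have -> : lam%:R * U' * p ^+ i.+1 * s i + U * p ^+ i * (s i * (- gamma + alpha + i%:R * - beta)) -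
      (- ((x + 1) * lam%:R * beta) * (U' * p ^+ i * s i) - (gamma - alpha - lam%:R * beta) * (U * p ^+ i * s i))
      = beta * p ^+ i * s i * (lam%:R * U' - U * (lam + i)%:R).
      rewrite /p exprS natrD; ring.
    by rewrite H subrr mulr0.
  rewrite E E' exprS; ring.
Qed.
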